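(* Every $\mathbb{R}$-tree is $(1,2)$-quasi-isometric to a simplicial tree; that is, for every $\mathbb{R}$-tree $T$ there exist a simplicial tree $\Gamma$ and a $(1,2)$-quasi-isometry $T\to\Gamma$.
   Context: An $\mathbb{R}$-tree is a metric space in which any two points are joined by a unique topological arc, which is a geodesic. A simplicial tree is a 1-dimensional simplicial complex which is an $\mathbb{R}$-tree for the path metric with edges isometric to $[0,1]$. A map $f:(X,d_X)\to(Y,d_Y)$ is a $(1,C)$-quasi-isometry if $d_X(a,b)-C\leqslant d_Y(f(a),f(b))\leqslant d_X(a,b)+C$ for all $a,b$ and every $y\in Y$ is within distance $C$ of $f(X)$. *)

(* Defs.v *)
From Stdlib Require Import Reals.
Open Scope R_scope.

Definition is_metric {X : Type} (d : X -> X -> R) : Prop :=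
  (forall x y, 0 <= d x y) /\
  (forall x y, d x y = 0 <-> x = y) /\
  (forall x y, d x y = d y x) /\
  (forall x y z, d x z <= d x y + d y z).

Definition in01 (s : R) : Prop := 0 <= s <= 1.

Definition is_arc {X : Type} (d : X -> X -> R) (a b : X) (A : X -> Prop) : Prop :=
  exists gamma : R -> X,
    gamma 0 = a /\ gamma 1 = b /\
    (forall s, in01 s -> forall eps, 0 < eps -> exists delta, 0 < delta /\
        forall s', in01 s' -> Rabs (s - s') < delta -> d (gamma s) (gamma s') < eps) /\
    (forall s s', in01 s -> in01 s' -> gamma s = gamma s' -> s = s') /\
    (forall x, A x <-> exists s, in01 s /\ gamma s = x).

Definition is_geodesic_segment {X : Type} (d : X -> X -> R) (a b : X) (A : X -> Prop) : Prop :=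
  exists sigma : R -> X,
    sigma 0 = a /\ sigma (d a b) = b /\
    (forall s t, 0 <= s <= d a b -> 0 <= t <= d a b ->
        d (sigma s) (sigma t) = Rabs (s - t)) /\
    (forall x, A x <-> exists s, 0 <= s <= d a b /\ sigma s = x).

Definition is_R_tree {X : Type} (d : X -> X -> R) : Prop :=
  is_metric d /\
  forall a b : X, a <> b ->
    exists A : X -> Prop,
      is_arc d a b A /\ is_geodesic_segment d a b A /\
      forall B : X -> Prop, is_arc d a b B -> forall x, B x <-> A x.

Definition simplicial_graph {V E : Type} (src tgt : E -> V) : Prop :=
  (forall e, src e <> tgt e) /\
  (forall e e', ((src e = src e' /\ tgt e = tgt e') \/
                 (src e = tgt e' /\ tgt e = src e')) -> e = e').

(** Points of the geometric realization: vertices, and interior points of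
    edges (edge [e] is identified with [0,1], [0 ~ src e], [1 ~ tgt e]). *)
Inductive real_pt (V E : Type) : Type :=
  | RV : V -> real_pt V E
  | RE : E -> {t : R | 0 < t < 1} -> real_pt V E.
Arguments RV {V E} _.
Arguments RE {V E} _ _.

Definition on_edge {V E : Type} (src tgt : E -> V) (e : E) (p : real_pt V E) (t : R) : Prop :=
  (p = RV (src e) /\ t = 0) \/ (p = RV (tgt e) /\ t = 1) \/
  (exists h : 0 < t < 1, p = RE e (exist _ t h)).

Definition edge_step {V E : Type} (src tgt : E -> V) (p q : real_pt V E) (c : R) : Prop :=
  exists e s t, on_edge src tgt e p s /\ on_edge src tgt e q t /\ c = Rabs (s - t).

Inductive chain {V E : Type} (src tgt : E -> V) : real_pt V E -> real_pt V E -> R -> Prop :=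
  | chain_nil : forall p, chain src tgt p p 0
  | chain_cons : forall p r q c L,
      edge_step src tgt p r c -> chain src tgt r q L -> chain src tgt p q (c + L).

Definition is_path_metric {V E : Type} (src tgt : E -> V)
    (D : real_pt V E -> real_pt V E -> R) : Prop :=
  forall p q,
    (forall L, chain src tgt p q L -> D p q <= L) /\
    (forall m, (forall L, chain src tgt p q L -> m <= L) -> m <= D p q).

Definition is_simplicial_tree {V E : Type} (src tgt : E -> V)
    (D : real_pt V E -> real_pt V E -> R) : Prop :=
  simplicial_graph src tgt /\ is_path_metric src tgt D /\ is_R_tree D.

Definition is_1C_quasi_isometry {X Y : Type} (dX : X -> X -> R) (dY : Y -> Y -> R)
    (C : R) (f : X -> Y) : Prop :=
  (forall a b, dX a b - C <= dY (f a) (f b) /\ dY (f a) (f b) <= dX a b + C) /\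
  (forall y, exists x, dY y (f x) <= C).

(* Main.v *)
Require Import Defs.
From Stdlib Require Import Reals Lra Lia Classical ClassicalEpsilon ProofIrrelevance.
Open Scope R_scope.

Lemma rmin_cases a b : (a <= b /\ Rmin a b = a) \/ (b < a /\ Rmin a b = b).
Proof. unfold Rmin; destruct (Rle_dec a b); [left|right]; lra. Qed.
Lemma rmax_cases a b : (a <= b /\ Rmax a b = b) \/ (b < a /\ Rmax a b = a).
Proof. unfold Rmax; destruct (Rle_dec a b); [left|right]; lra. Qed.

Ltac elim_min :=
  repeat match goal with
  | |- context [Rmin ?a ?b] =>
      let H := fresh "Hm" in destruct (rmin_cases a b) as [[? H]|[? H]]; rewrite H in *; clear H
  | H0 : context [Rmin ?a ?b] |- _ =>
      lazymatch type of H0 with forall _, _ => fail | _ =>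
      let H := fresh "Hm" in destruct (rmin_cases a b) as [[? H]|[? H]]; rewrite H in *; clear H end
  | |- context [Rmax ?a ?b] =>
      let H := fresh "Hm" in destruct (rmax_cases a b) as [[? H]|[? H]]; rewrite H in *; clear H
  | H0 : context [Rmax ?a ?b] |- _ =>
      lazymatch type of H0 with forall _, _ => fail | _ =>
      let H := fresh "Hm" in destruct (rmax_cases a b) as [[? H]|[? H]]; rewrite H in *; clear H end
  end.

Ltac elim_abs :=
  repeat match goal with
  | |- context [Rabs ?a] =>
      destruct (Rcase_abs a); [rewrite (Rabs_left a) in * by lra | rewrite (Rabs_right a) in * by lra]
  | H0 : context [Rabs ?a] |- _ =>
      destruct (Rcase_abs a); [rewrite (Rabs_left a) in * by lra | rewrite (Rabs_right a) in * by lra]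
  end.

Lemma first_zero (phi : R -> R) u v :
  u <= v ->
  (forall s, u <= s <= v -> forall eps, 0 < eps -> exists delta, 0 < delta /\
      forall s', u <= s' <= v -> Rabs (s - s') < delta -> Rabs (phi s - phi s') < eps) ->
  phi v = 0 ->
  exists s0, u <= s0 <= v /\ phi s0 = 0 /\ forall s, u <= s <= v -> phi s = 0 -> s0 <= s.
Proof.
  intros Huv Hc Hv.
  set (E := fun r => u <= - r <= v /\ phi (- r) = 0).
  assert (Hb : bound E). { exists (- u). intros r [Hr _]. lra. }
  assert (He : exists r, E r). { exists (- v). unfold E. rewrite Ropp_involutive. split; [lra|exact Hv]. }
  destruct (completeness E Hb He) as [l [Hub Hlub]].
  assert (Hlow : forall s, u <= s <= v -> phi s = 0 -> - l <= s).
  { intros s Hs Hp. assert (E (- s)) by (unfold E; rewrite Ropp_involutive; tauto).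
    specialize (Hub _ H). lra. }
  assert (Hu : u <= - l).
  { assert (l <= - u). { apply Hlub. intros r [Hr _]. lra. } lra. }
  assert (Hvl : - l <= v) by (apply Hlow; [lra|exact Hv]).
  exists (- l). split; [lra|]. split; [|exact Hlow].
  destruct (Req_dec (phi (- l)) 0) as [Hz|Hnz]; [exact Hz|exfalso].
  assert (Heta : 0 < Rabs (phi (- l))) by (apply Rabs_pos_lt; exact Hnz).
  destruct (Hc (- l) (conj Hu Hvl) _ Heta) as [d [Hd Hcd]].
  destruct (classic (exists s, u <= s <= v /\ phi s = 0 /\ s < - l + d)) as [[s [Hs [Hps Hsl]]]|Hno].
  - assert (- l <= s) by (apply Hlow; assumption).
    assert (Rabs (- l - s) < d) by (elim_abs; lra).
    specialize (Hcd s Hs H0). rewrite Hps, Rminus_0_r in Hcd. lra.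
  - assert (l <= l - d).
    { apply Hlub. intros r [Hr Hpr].
      destruct (Rle_dec r (l - d)) as [?|Hn]; [assumption|].
      exfalso; apply Hno. exists (- r). split; [lra|]. split; [exact Hpr|lra]. }
    lra.
Qed.

Lemma Rdiv_le_0_compat a b : 0 <= a -> 0 < b -> 0 <= a / b.
Proof. intros. unfold Rdiv. apply Rmult_le_pos; [lra|]. left; apply Rinv_0_lt_compat; lra. Qed.

Definition is_geo {P : Type} (D : P -> P -> R) (sg : R -> P) (a b : P) (L : R) : Prop :=
  0 <= L /\ sg 0 = a /\ sg L = b /\
  forall s t, 0 <= s <= L -> 0 <= t <= L -> D (sg s) (sg t) = Rabs (s - t).

Lemma lip_cont {P : Type} (D : P -> P -> R) (g : R -> P) K :
  0 < K -> (forall s s', in01 s -> in01 s' -> D (g s) (g s') <= K * Rabs (s - s')) ->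
  forall s, in01 s -> forall eps, 0 < eps -> exists delta, 0 < delta /\
        forall s', in01 s' -> Rabs (s - s') < delta -> D (g s) (g s') < eps.
Proof.
  intros HK Hl s Hs eps He. exists (eps / K). split.
  - apply Rdiv_lt_0_compat; lra.
  - intros s' Hs' Hd. specialize (Hl s s' Hs Hs').
    assert (K * Rabs (s - s') < K * (eps / K)) by (apply Rmult_lt_compat_l; lra).
    replace (K * (eps / K)) with eps in H by (field; lra). lra.
Qed.

Lemma metric_zero {P : Type} (D : P -> P -> R) x y : is_metric D -> D x y = 0 -> x = y.
Proof. intros [_ [H _]] E. apply H, E. Qed.

Lemma geo_len {P : Type} (D : P -> P -> R) sg a b L : is_geo D sg a b L -> D a b = L.
Proof.
  intros [HL [H0 [H1 H]]]. rewrite <- H0, <- H1, H by lra. elim_abs; lra.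
Qed.

Lemma geo_arc {P : Type} (D : P -> P -> R) sg a b L :
  is_metric D -> is_geo D sg a b L -> 0 < L ->
  is_arc D a b (fun x => exists s, 0 <= s <= L /\ sg s = x).
Proof.
  intros HM Hg HL. pose proof Hg as [_ [H0 [H1 H]]].
  exists (fun s => sg (s * L)). split; [rewrite Rmult_0_l; exact H0|].
  split; [rewrite Rmult_1_l; exact H1|]. split; [|split].
  - apply (lip_cont D (fun s => sg (s * L)) L HL).
    intros s s' Hs Hs'. unfold in01 in *. rewrite H by nra.
    rewrite <- Rmult_minus_distr_r, Rabs_mult, (Rabs_right L) by lra. lra.
  - intros s s' Hs Hs' E. unfold in01 in *.
    assert (D (sg (s * L)) (sg (s' * L)) = 0) by (rewrite E; destruct HM as [_ [HM _]]; apply HM; reflexivity).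
    rewrite H in H2 by nra. rewrite <- Rmult_minus_distr_r, Rabs_mult, (Rabs_right L) in H2 by lra.
    assert (Rabs (s - s') = 0) by nra. elim_abs; lra.
  - intros x. split.
    + intros [s [Hs E]]. exists (s / L). split.
      * unfold in01. split; [apply Rdiv_le_0_compat; lra|]. apply (Rmult_le_reg_r L); [lra|].
        field_simplify; lra.
      * replace (s / L * L) with s by (field; lra). exact E.
    + intros [s [Hs E]]. exists (s * L). unfold in01 in Hs. split; [nra|exact E].
Qed.

Lemma concat_arc {P : Type} (D : P -> P -> R) g1 g2 a c b L1 L2 :
  is_metric D -> is_geo D g1 a c L1 -> is_geo D g2 c b L2 -> 0 < L1 -> 0 < L2 ->
  (forall s u, 0 <= s <= L1 -> 0 <= u <= L2 -> g1 s = g2 u -> s = L1) ->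
  is_arc D a b (fun x => (exists s, 0 <= s <= L1 /\ g1 s = x) \/ (exists u, 0 <= u <= L2 /\ g2 u = x)).
Proof.
  intros HM [_ [A0 [A1 HA]]] [_ [B0 [B1 HB]]] HL1 HL2 Hdis.
  pose proof HM as [Hpos [Hz [Hsym Htri]]].
  set (g := fun s => if Rle_dec s (1/2) then g1 (2 * s * L1) else g2 ((2 * s - 1) * L2)).
  exists g. unfold g. split; [destruct (Rle_dec 0 (1/2)); [|lra]; rewrite Rmult_0_r, Rmult_0_l; exact A0|].
  split; [destruct (Rle_dec 1 (1/2)); [lra|]; replace ((2*1-1)*L2) with L2 by ring; exact B1|].
  split; [|split].
  - apply (lip_cont D g (2 * (L1 + L2))); [lra|].
    intros s s' Hs Hs'. unfold in01 in *. unfold g.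
    destruct (Rle_dec s (1/2)); destruct (Rle_dec s' (1/2)).
    + rewrite HA by nra. replace (2 * s * L1 - 2 * s' * L1) with ((s - s') * (2 * L1)) by ring.
      rewrite Rabs_mult, (Rabs_right (2 * L1)) by lra.
      assert (0 <= Rabs (s - s')) by apply Rabs_pos. nra.
    + eapply Rle_trans. apply (Htri _ c).
      rewrite <- A1 at 1. rewrite <- B0 at 1. rewrite HA, HB by nra.
      elim_abs; nra.
    + eapply Rle_trans. apply (Htri _ c).
      rewrite <- A1 at 2. rewrite <- B0 at 1. rewrite HA, HB by nra.
      elim_abs; nra.
    + rewrite HB by nra. replace ((2 * s - 1) * L2 - (2 * s' - 1) * L2) with ((s - s') * (2 * L2)) by ring.
      rewrite Rabs_mult, (Rabs_right (2 * L2)) by lra.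
      assert (0 <= Rabs (s - s')) by apply Rabs_pos. nra.
  - intros s s' Hs Hs'. unfold in01 in *. unfold g.
    destruct (Rle_dec s (1/2)); destruct (Rle_dec s' (1/2)); intros E.
    + assert (D (g1 (2 * s * L1)) (g1 (2 * s' * L1)) = 0) by (rewrite E; apply Hz; reflexivity).
      rewrite HA in H by nra. elim_abs; nra.
    + exfalso. pose proof E as E'. apply Hdis in E'; [|nra|nra].
      rewrite E', A1, <- B0 in E.
      assert (D (g2 0) (g2 ((2 * s' - 1) * L2)) = 0) by (rewrite E; apply Hz; reflexivity).
      rewrite HB in H by nra. elim_abs; nra.
    + exfalso. symmetry in E. pose proof E as E'. apply Hdis in E'; [|nra|nra].
      rewrite E', A1, <- B0 in E.
      assert (D (g2 0) (g2 ((2 * s - 1) * L2)) = 0) by (rewrite E; apply Hz; reflexivity).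
      rewrite HB in H by nra. elim_abs; nra.
    + assert (D (g2 ((2 * s - 1) * L2)) (g2 ((2 * s' - 1) * L2)) = 0) by (rewrite E; apply Hz; reflexivity).
      rewrite HB in H by nra. elim_abs; nra.
  - intros x. split.
    + intros [[s [Hs E]]|[u [Hu E]]].
      * exists (s / (2 * L1)). unfold in01.
        assert (0 <= s / (2 * L1) <= 1/2).
        { split; [apply Rdiv_le_0_compat; lra|]. apply (Rmult_le_reg_r (2 * L1)); [lra|].
          field_simplify; lra. }
        split; [lra|]. destruct (Rle_dec (s / (2 * L1)) (1/2)); [|lra].
        replace (2 * (s / (2 * L1)) * L1) with s by (field; lra). exact E.
      * destruct (Req_dec u 0) as [Hu0|Hu0].
        -- subst u. rewrite B0 in E. subst x. exists (1/2). unfold in01. split; [lra|].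
           destruct (Rle_dec (1/2) (1/2)); [|lra]. replace (2 * (1/2) * L1) with L1 by field. exact A1.
        -- exists ((u / L2 + 1) / 2). unfold in01.
           assert (0 < u / L2 <= 1).
           { split; [apply Rdiv_lt_0_compat; lra|]. apply (Rmult_le_reg_r L2); [lra|].
             field_simplify; lra. }
           split; [lra|]. destruct (Rle_dec ((u / L2 + 1) / 2) (1/2)); [lra|].
           replace ((2 * ((u / L2 + 1) / 2) - 1) * L2) with u by (field; lra). exact E.
    + intros [s [Hs E]]. unfold in01 in Hs. destruct (Rle_dec s (1/2)).
      * left. exists (2 * s * L1). split; [nra|exact E].
      * right. exists ((2 * s - 1) * L2). split; [nra|exact E].
Qed.

Section XTree.
Variable X : Type.
Variable d : X -> X -> R.
Hypothesis HT : is_R_tree d.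

Let HM : is_metric d := proj1 HT.
Let dpos : forall x y, 0 <= d x y := proj1 HM.
Let dz : forall x y, d x y = 0 <-> x = y := proj1 (proj2 HM).
Let dsym : forall x y, d x y = d y x := proj1 (proj2 (proj2 HM)).
Let dtri : forall x y z, d x z <= d x y + d y z := proj2 (proj2 (proj2 HM)).

Lemma dxx x : d x x = 0.
Proof. apply dz; reflexivity. Qed.

Lemma geo_ex a b : exists sg, is_geo d sg a b (d a b).
Proof.
  destruct (classic (a = b)) as [<-|Hab].
  - exists (fun _ => a). rewrite dxx. split; [lra|]. split; [reflexivity|]. split; [reflexivity|].
    intros s t Hs Ht. rewrite dxx. replace s with 0 by lra. replace t with 0 by lra.
    rewrite Rminus_0_r, Rabs_R0; reflexivity.
  - destruct (proj2 HT a b Hab) as [A [_ [[sg [H0 [H1 [H _]]]] _]]].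
    exists sg. split; [apply dpos|]. tauto.
Qed.

Lemma arc_in_geo a b sg B : is_geo d sg a b (d a b) -> is_arc d a b B -> a <> b ->
  forall x, B x -> exists s, 0 <= s <= d a b /\ sg s = x.
Proof.
  intros Hg HB Hab x Bx.
  assert (HL : 0 < d a b).
  { destruct (dpos a b) as [?|E]; [assumption|]. exfalso; apply Hab, dz; auto. }
  pose proof (geo_arc d sg a b _ HM Hg HL) as HA'.
  destruct (proj2 HT a b Hab) as [A [_ [_ Huniq]]].
  apply (Huniq _ HA'). apply (Huniq _ HB). exact Bx.
Qed.

Definition betw (a c b : X) := d a c + d c b = d a b.

Lemma geo_betw sg a b L s : is_geo d sg a b L -> 0 <= s <= L -> betw a (sg s) b /\ d a (sg s) = s.
Proof.
  intros Hg Hs. pose proof (geo_len d _ _ _ _ Hg) as HL. destruct Hg as [_ [H0 [H1 H]]].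
  assert (E1 : d a (sg s) = s) by (rewrite <- H0, H by lra; elim_abs; lra).
  assert (E2 : d (sg s) b = L - s) by (rewrite <- H1, H by lra; elim_abs; lra).
  unfold betw. rewrite E1, E2, HL. split; ring.
Qed.

Lemma concat_between g1 g2 a c b L1 L2 :
  is_geo d g1 a c L1 -> is_geo d g2 c b L2 -> 0 < L1 -> 0 < L2 ->
  (forall s u, 0 <= s <= L1 -> 0 <= u <= L2 -> g1 s = g2 u -> s = L1) ->
  betw a c b.
Proof.
  intros H1 H2 HL1 HL2 Hdis.
  assert (Hab : a <> b).
  { intros E. pose proof H1 as [_ [A0 _]]. pose proof H2 as [_ [_ [B1 _]]].
    assert (g1 0 = g2 L2) by congruence. apply Hdis in H; lra. }
  pose proof (concat_arc d g1 g2 a c b L1 L2 HM H1 H2 HL1 HL2 Hdis) as HB.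
  destruct (geo_ex a b) as [sg Hg].
  assert (Hc : exists s, 0 <= s <= d a b /\ sg s = c).
  { eapply arc_in_geo; eauto. left. exists L1. split; [lra|]. apply H1. }
  destruct Hc as [s [Hs <-]]. apply (geo_betw _ _ _ _ _ Hg Hs).
Qed.

Lemma betw_unique a b z sg : is_geo d sg a b (d a b) -> betw a z b -> z = sg (d a z).
Proof.
  intros Hg Hz. pose proof Hg as [_ [H0 [H1 H]]].
  destruct (classic (z = a)) as [->|Hza]; [rewrite dxx; auto|].
  destruct (classic (z = b)) as [->|Hzb].
  { rewrite H1. reflexivity. }
  assert (La : 0 < d a z).
  { destruct (dpos a z) as [?|E]; [assumption|]. exfalso; apply Hza; symmetry; apply dz; auto. }
  assert (Lb : 0 < d z b).
  { destruct (dpos z b) as [?|E]; [assumption|]. exfalso; apply Hzb; apply dz; auto. }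
  destruct (geo_ex a z) as [g1 G1]. destruct (geo_ex z b) as [g2 G2].
  assert (Hab : a <> b).
  { intros ->. unfold betw in Hz. rewrite dxx, (dsym z b) in Hz. lra. }
  assert (Hdis : forall s u, 0 <= s <= d a z -> 0 <= u <= d z b -> g1 s = g2 u -> s = d a z).
  { intros s u Hs Hu E.
    destruct (geo_betw _ _ _ _ _ G1 Hs) as [B1 E1].
    destruct (geo_betw _ _ _ _ _ G2 Hu) as [B2 E2].
    unfold betw in *. rewrite E in B1, E1.
    pose proof (dtri a (g2 u) b). lra. }
  pose proof (concat_arc d g1 g2 a z b _ _ HM G1 G2 La Lb Hdis) as HB.
  destruct (arc_in_geo a b sg _ Hg HB Hab z) as [s [Hs E]].
  { left. exists (d a z). split; [lra|]. apply G1. }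
  rewrite <- E. destruct (geo_betw _ _ _ _ _ Hg Hs) as [_ ->]. reflexivity.
Qed.

Lemma tripod x y z : exists c, betw x c y /\ betw x c z /\ betw y c z.
Proof.
  destruct (geo_ex x y) as [g1 G1]. pose proof G1 as [HL1 [A0 [A1 HA]]].
  set (phi := fun s => d y (g1 s) + d (g1 s) z - d y z).
  assert (Hc : forall s, 0 <= s <= d x y -> forall eps, 0 < eps -> exists delta, 0 < delta /\
      forall s', 0 <= s' <= d x y -> Rabs (s - s') < delta -> Rabs (phi s - phi s') < eps).
  { intros s Hs eps He. exists (eps / 2). split; [lra|]. intros s' Hs' Hd.
    assert (E : d (g1 s) (g1 s') = Rabs (s - s')) by (apply HA; lra).
    unfold phi. pose proof (dtri y (g1 s) (g1 s')). pose proof (dtri y (g1 s') (g1 s)).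
    pose proof (dtri (g1 s) (g1 s') z). pose proof (dtri (g1 s') (g1 s) z).
    rewrite (dsym (g1 s') (g1 s)) in *. elim_abs; lra. }
  assert (Hv : phi (d x y) = 0) by (unfold phi; rewrite A1, dxx; ring).
  destruct (first_zero phi 0 (d x y) HL1 Hc Hv) as [s0 [Hs0 [Hp0 Hfirst]]].
  set (c := g1 s0).
  assert (Bc : betw y c z) by (unfold betw, phi in *; unfold c; lra).
  destruct (geo_betw _ _ _ _ _ G1 Hs0) as [Bxy Ex].
  destruct (Req_dec s0 0) as [E0|N0].
  { exists x. unfold c in Bc. rewrite E0, A0 in Bc. unfold betw. rewrite dxx. repeat split; try ring. exact Bc. }
  destruct (classic (c = z)) as [Ecz|Ncz].
  { exists c. split; [exact Bxy|]. split; [|exact Bc]. unfold betw. rewrite Ecz, dxx. ring. }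
  exists c. split; [exact Bxy|]. split; [|exact Bc].
  destruct (geo_ex c z) as [g2 G2].
  assert (L2 : 0 < d c z).
  { destruct (dpos c z) as [?|E]; [assumption|]. exfalso; apply Ncz, dz; auto. }
  assert (G1' : is_geo d g1 x c s0).
  { split; [lra|]. split; [exact A0|]. split; [reflexivity|]. intros; apply HA; lra. }
  apply (concat_between g1 g2 x c z s0 (d c z) G1' G2); [lra|exact L2|].
  intros s u Hs Hu E.
  destruct (geo_betw _ _ _ _ _ G2 Hu) as [B2 E2].
  assert (phi s = 0).
  { unfold phi. rewrite E. unfold betw in B2, Bc. pose proof (dtri y c (g2 u)).
    pose proof (dtri y (g2 u) z). lra. }
  apply Hfirst in H; lra.
Qed.


Variable x0 : X.
Definition rho x := d x0 x.
Definition gp x y := (d x0 x + d x0 y - d x y) / 2.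
Definition gx (w : X) : R -> X := proj1_sig (constructive_indefinite_description _ (geo_ex x0 w)).
Lemma gx_geo w : is_geo d (gx w) x0 w (d x0 w).
Proof. unfold gx. destruct (constructive_indefinite_description _ _); simpl; assumption. Qed.

Lemma gp_sym x y : gp x y = gp y x.
Proof. unfold gp. rewrite (dsym x y). lra. Qed.
Lemma gp_xx x : gp x x = rho x.
Proof. unfold gp, rho. rewrite dxx. lra. Qed.
Lemma gp_ge0 x y : 0 <= gp x y.
Proof. unfold gp. pose proof (dtri x x0 y). rewrite (dsym x x0) in H. lra. Qed.
Lemma gp_le x y : gp x y <= rho x.
Proof. unfold gp, rho. pose proof (dtri x0 x y). lra. Qed.
Lemma gp_le' x y : gp x y <= rho y.
Proof. rewrite gp_sym. apply gp_le. Qed.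
Lemma rho_ge0 x : 0 <= rho x.
Proof. apply dpos. Qed.
Lemma d_gp x y : d x y = rho x + rho y - 2 * gp x y.
Proof. unfold gp, rho. field. Qed.
Lemma eq_of x y : rho x = rho y -> gp x y = rho x -> x = y.
Proof. intros. apply dz. rewrite d_gp. lra. Qed.

Lemma gx_rho w s : 0 <= s <= rho w -> rho (gx w s) = s.
Proof. intros. destruct (geo_betw _ _ _ _ s (gx_geo w) H). exact H1. Qed.
Lemma gx_d w s : 0 <= s <= rho w -> d (gx w s) w = rho w - s.
Proof. intros. destruct (geo_betw _ _ _ _ s (gx_geo w) H). unfold betw, rho in *. lra. Qed.
Lemma gx_end w : gx w (rho w) = w.
Proof. apply (gx_geo w). Qed.
Lemma gx_0 w : gx w 0 = x0.
Proof. apply (gx_geo w). Qed.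

Lemma common x y t : 0 <= t <= gp x y -> gx x t = gx y t.
Proof.
  intros Ht. destruct (tripod x0 x y) as [c [B1 [B2 B3]]].
  assert (Ec : d x0 c = gp x y) by (pose proof (dsym c x); unfold betw, gp in *; lra).
  pose proof (gp_le x y). pose proof (gp_le' x y).
  assert (Hc : c = gx x (d x0 c)) by (apply (betw_unique _ _ _ _ (gx_geo x) B1)).
  set (p := gx x t).
  assert (E1 : rho p = t) by (apply gx_rho; lra).
  assert (E2 : d p c = gp x y - t).
  { rewrite Hc, Ec. unfold p. destruct (gx_geo x) as [_ [_ [_ H']]]. rewrite H' by (unfold rho in *; lra).
    elim_abs; lra. }
  assert (Bp : betw x0 p y).
  { unfold betw. pose proof (dtri x0 p y). pose proof (dtri p c y). unfold rho, betw in *. lra. }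
  rewrite (betw_unique _ _ _ _ (gx_geo y) Bp). fold (rho p). rewrite E1. reflexivity.
Qed.

Lemma ultra x y z : Rmin (gp x y) (gp y z) <= gp x z.
Proof.
  set (t := Rmin (gp x y) (gp y z)).
  assert (H1 : t <= gp x y) by apply Rmin_l. assert (H2 : t <= gp y z) by apply Rmin_r.
  assert (H0 : 0 <= t) by (apply Rmin_glb; apply gp_ge0).
  pose proof (gp_le x y). pose proof (gp_le' y z).
  assert (E1 : gx x t = gx y t) by (apply common; lra).
  assert (E2 : gx y t = gx z t) by (apply common; lra).
  pose proof (dtri x (gx x t) z) as Htr.
  rewrite (dsym x (gx x t)), gx_d in Htr by lra. rewrite E1, E2, gx_d in Htr by lra.
  rewrite d_gp in Htr. lra.
Qed.

Lemma gp_gx x y s : 0 <= s <= rho x -> gp (gx x s) y = Rmin s (gp x y).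
Proof.
  intros Hs. pose proof (gx_d x s Hs) as Ed. pose proof (gx_rho x s Hs) as Ev.
  assert (Evx : gp (gx x s) x = s) by (unfold gp, rho in *; lra).
  pose proof (ultra (gx x s) x y). pose proof (ultra x (gx x s) y). rewrite gp_sym in H0. rewrite Evx in *.
  pose proof (gp_le (gx x s) y). rewrite Ev in H1.
  elim_min; lra.
Qed.

End XTree.

Section GenTree.
Variable P : Type.
Variable D : P -> P -> R.
Hypothesis HM : is_metric D.
Hypothesis H4 : forall x y z w, D x y + D z w <= Rmax (D x z + D y w) (D x w + D y z).
Hypothesis HG : forall a b, exists sg, is_geo D sg a b (D a b).

Let Dpos : forall x y, 0 <= D x y := proj1 HM.
Let Dz : forall x y, D x y = 0 <-> x = y := proj1 (proj2 HM).
Let Dsym : forall x y, D x y = D y x := proj1 (proj2 (proj2 HM)).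
Let Dtri : forall x y z, D x z <= D x y + D y z := proj2 (proj2 (proj2 HM)).

Lemma Dxx x : D x x = 0.
Proof. apply Dz; reflexivity. Qed.

Definition gr a x y := (D a x + D a y - D x y) / 2.

Lemma gr_ultra a x z w : Rmin (gr a x z) (gr a z w) <= gr a x w.
Proof.
  pose proof (H4 x w a z). unfold gr.
  rewrite (Dsym x a), (Dsym w z), (Dsym w a) in H. elim_min; lra.
Qed.

Lemma gbetw sg a b L s : is_geo D sg a b L -> 0 <= s <= L ->
  D a (sg s) = s /\ D (sg s) b = L - s.
Proof.
  intros [_ [H0 [H1 H]]] Hs.
  split; [rewrite <- H0, H by lra|rewrite <- H1, H by lra]; elim_abs; lra.
Qed.

Lemma BU a b x sg : is_geo D sg a b (D a b) -> D a x + D x b = D a b -> x = sg (D a x).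
Proof.
  intros Hg Hb. assert (Ht : 0 <= D a x <= D a b) by (pose proof (Dpos x b); pose proof (Dpos a x); lra).
  destruct (gbetw _ _ _ _ _ Hg Ht) as [E1 E2].
  pose proof (H4 x (sg (D a x)) a b). rewrite (Dsym x a), (Dsym (sg (D a x)) a), E1, E2 in H.
  apply Dz. pose proof (Dpos x (sg (D a x))). elim_min; lra.
Qed.

Lemma key a x z w : D a x + D x z = D a z -> D w z < D x z -> D a x + D x w = D a w.
Proof.
  intros Hb Hlt. pose proof (gr_ultra a x z w). unfold gr in H.
  pose proof (Dtri a w z). pose proof (Dtri a x w). rewrite (Dsym z w) in H.
  elim_min; lra.
Qed.

Definition contin (g : R -> P) u v :=
  forall s, u <= s <= v -> forall eps, 0 < eps -> exists delta, 0 < delta /\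
      forall s', u <= s' <= v -> Rabs (s - s') < delta -> D (g s) (g s') < eps.

Lemma hitting g u v a x : u <= v -> contin g u v -> g u = a ->
  D a x + D x (g v) = D a (g v) -> exists s, u <= s <= v /\ g s = x.
Proof.
  intros Huv Hc Ha Hb.
  set (phi := fun s => D a x + D x (g s) - D a (g s)).
  assert (Hpc : forall s, u <= s <= v -> forall eps, 0 < eps -> exists delta, 0 < delta /\
      forall s', u <= s' <= v -> Rabs (s - s') < delta -> Rabs (phi s - phi s') < eps).
  { intros s Hs eps He. destruct (Hc s Hs (eps / 2)) as [dl [Hdl Hd]]; [lra|].
    exists dl. split; [exact Hdl|]. intros s' Hs' Hss. specialize (Hd s' Hs' Hss).
    unfold phi. pose proof (Dtri x (g s) (g s')). pose proof (Dtri x (g s') (g s)).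
    pose proof (Dtri a (g s) (g s')). pose proof (Dtri a (g s') (g s)).
    rewrite (Dsym (g s') (g s)) in *. elim_abs; lra. }
  assert (Hv : phi v = 0) by (unfold phi; lra).
  destruct (first_zero phi u v Huv Hpc Hv) as [s0 [Hs0 [Hp0 Hfirst]]].
  exists s0. split; [exact Hs0|].
  destruct (classic (g s0 = x)) as [E|NE]; [exact E|exfalso].
  assert (Hr : 0 < D x (g s0)).
  { destruct (Dpos x (g s0)) as [?|E]; [assumption|]. exfalso; apply NE; symmetry; apply Dz; auto. }
  destruct (Req_dec s0 u) as [Eu|Nu].
  { unfold phi in Hp0. rewrite Eu, Ha, Dxx, (Dsym x a) in Hp0. apply NE. rewrite Eu, Ha.
    apply Dz. lra. }
  destruct (Hc s0 Hs0 _ Hr) as [dl [Hdl Hd]].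
  set (s' := Rmax u (s0 - dl / 2)).
  assert (Hs' : u <= s' <= v /\ s' < s0 /\ Rabs (s0 - s') < dl) by (unfold s'; elim_min; elim_abs; lra).
  destruct Hs' as [Hs'1 [Hs'2 Hs'3]].
  specialize (Hd s' Hs'1 Hs'3).
  assert (phi s' = 0).
  { unfold phi. unfold phi in Hp0. rewrite (Dsym (g s0) (g s')) in Hd.
    pose proof (key a x (g s0) (g s')). lra. }
  apply Hfirst in H; lra.
Qed.

Lemma hitting_rev g u v b x : u <= v -> contin g u v -> g v = b ->
  D b x + D x (g u) = D b (g u) -> exists s, u <= s <= v /\ g s = x.
Proof.
  intros Huv Hc Hb Hbt.
  destruct (hitting (fun s => g (- s)) (- v) (- u) b x) as [s [Hs E]].
  - lra.
  - intros s Hs eps He. destruct (Hc (- s) ltac:(lra) eps He) as [dl [Hdl Hd]].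
    exists dl. split; [exact Hdl|]. intros s' Hs' Hss. apply Hd; [lra|].
    replace (- s - - s') with (- (s - s')) by ring. rewrite Rabs_Ropp. exact Hss.
  - rewrite Ropp_involutive. exact Hb.
  - rewrite Ropp_involutive. exact Hbt.
  - exists (- s). split; [lra|exact E].
Qed.

Theorem gen_R_tree : is_R_tree D.
Proof.
  split; [exact HM|]. intros a b Hab.
  assert (HL : 0 < D a b).
  { destruct (Dpos a b) as [?|E]; [assumption|]. exfalso; apply Hab, Dz; auto. }
  destruct (HG a b) as [sg Hg]. pose proof Hg as [_ [H0 [H1 Hiso]]].
  exists (fun x => exists s, 0 <= s <= D a b /\ sg s = x).
  split; [apply (geo_arc D sg a b _ HM Hg HL)|].
  split; [exists sg; split; [exact H0|]; split; [exact H1|]; split; [exact Hiso|]; tauto|].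
  intros B [g [G0 [G1 [Gc [Gi Gim]]]]] x.
  assert (Hc : contin g 0 1) by exact Gc.
  split.
  - intros Bx. apply Gim in Bx. destruct Bx as [s0 [Hs0 Ex]]. unfold in01 in Hs0.
    set (L := D a b). set (t := (D a x + L - D x b) / 2).
    assert (Ht : 0 <= t <= L) by (unfold t, L; pose proof (Dtri a b x); pose proof (Dtri x a b); rewrite (Dsym x a), (Dsym b x) in *; lra).
    destruct (gbetw _ _ _ _ _ Hg Ht) as [Ec1 Ec2].
    set (c := sg t).
    assert (Bac : D a c + D c x = D a x).
    { pose proof (gr_ultra a c b x). unfold gr in H. fold c in Ec1, Ec2.
      pose proof (Dtri a c x). pose proof (Dtri a x c). rewrite (Dsym x c) in H3.
      rewrite (Dsym b x) in H. unfold t, L in *. elim_min; lra. }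
    assert (Bbc : D b c + D c x = D b x).
    { pose proof (gr_ultra b c a x). unfold gr in H. fold c in Ec1, Ec2.
      pose proof (Dtri b c x). pose proof (Dtri b x c). rewrite (Dsym x c) in H3.
      rewrite (Dsym b c), (Dsym b a), (Dsym c a), (Dsym b x) in *. unfold t, L in *. elim_min; lra. }
    destruct (classic (x = c)) as [Exc|Nxc].
    { exists t. split; [exact Ht|]. symmetry; exact Exc. }
    exfalso.
    destruct (hitting g 0 s0 a c ltac:(lra)) as [s1 [Hs1 E1]].
    { intros s Hs eps He. destruct (Hc s ltac:(lra) eps He) as [dl [Hdl Hd]].
      exists dl; split; [exact Hdl|]. intros; apply Hd; [lra|assumption]. }
    { exact G0. } { rewrite Ex. exact Bac. }
    destruct (hitting_rev g s0 1 b c ltac:(lra)) as [s2 [Hs2 E2]].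
    { intros s Hs eps He. destruct (Hc s ltac:(lra) eps He) as [dl [Hdl Hd]].
      exists dl; split; [exact Hdl|]. intros; apply Hd; [lra|assumption]. }
    { exact G1. } { rewrite Ex. exact Bbc. }
    assert (s1 <> s0) by (intros ->; apply Nxc; rewrite <- Ex; exact E1).
    assert (s2 <> s0) by (intros ->; apply Nxc; rewrite <- Ex; exact E2).
    assert (s1 = s2) by (apply Gi; unfold in01; [lra|lra|congruence]).
    lra.
  - intros [s [Hs Ex]]. apply Gim.
    destruct (gbetw _ _ _ _ _ Hg Hs) as [E1 E2]. rewrite Ex in E1, E2.
    destruct (hitting g 0 1 a x ltac:(lra) Hc G0) as [s' [Hs' E]].
    { rewrite G1. lra. }
    exists s'. split; [exact Hs'|exact E].
Qed.

End GenTree.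

Lemma four (xy xz xw yz yw zw : R) :
  Rmin xy yz <= xz -> Rmin xz yz <= xy -> Rmin xy xz <= yz ->
  Rmin xy yw <= xw -> Rmin xw yw <= xy -> Rmin xy xw <= yw ->
  Rmin xz zw <= xw -> Rmin xw zw <= xz -> Rmin xz xw <= zw ->
  Rmin yz zw <= yw -> Rmin yw zw <= yz -> Rmin yz yw <= zw ->
  Rmin (xz + yw) (xw + yz) <= xy + zw.
Proof. intros. elim_min; lra. Qed.

Section MTree.
Variable P : Type.
Variable h : P -> R.
Variable m : P -> P -> R.
Variable anc : P -> R -> P.
Hypothesis h_ge0 : forall p, 0 <= h p.
Hypothesis m_ge0 : forall p q, 0 <= m p q.
Hypothesis m_sym : forall p q, m p q = m q p.
Hypothesis m_le : forall p q, m p q <= h p.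
Hypothesis m_self : forall p, m p p = h p.
Hypothesis m_ultra : forall p q r, Rmin (m p r) (m r q) <= m p q.
Hypothesis m_eq : forall p q, h p = h q -> m p q = h p -> p = q.
Hypothesis anc_h : forall p t, 0 <= t <= h p -> h (anc p t) = t.
Hypothesis anc_m : forall p t q, 0 <= t <= h p -> m (anc p t) q = Rmin t (m p q).

Definition DM p q := h p + h q - 2 * m p q.

Lemma m_le' p q : m p q <= h q.
Proof. rewrite m_sym. apply m_le. Qed.

Lemma DM_metric : is_metric DM.
Proof.
  unfold DM. split; [|split; [|split]].
  - intros x y. pose proof (m_le x y). pose proof (m_le' x y). lra.
  - intros x y. split.
    + intros E. pose proof (m_le x y). pose proof (m_le' x y). apply m_eq; lra.
    + intros ->. rewrite m_self. ring.
  - intros x y. rewrite m_sym. ring.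
  - intros x y z. pose proof (m_ultra x z y). pose proof (m_le' x y). pose proof (m_le y z).
    elim_min; lra.
Qed.

Lemma DM_four x y z w : DM x y + DM z w <= Rmax (DM x z + DM y w) (DM x w + DM y z).
Proof.
  unfold DM.
  pose proof (four (m x y) (m x z) (m x w) (m y z) (m y w) (m z w)).
  assert (forall a b c, Rmin (m a b) (m b c) <= m a c) by (intros; apply m_ultra).
  assert (forall a b c, Rmin (m a b) (m a c) <= m b c) by (intros; rewrite (m_sym a b); apply m_ultra).
  assert (forall a b c, Rmin (m a c) (m b c) <= m a b) by (intros; rewrite (m_sym b c); apply m_ultra).
  specialize (H (H0 _ _ _) (H2 _ _ _) (H1 _ _ _) (H0 _ _ _) (H2 _ _ _) (H1 _ _ _)
                (H0 _ _ _) (H2 _ _ _) (H1 _ _ _) (H0 _ _ _) (H2 _ _ _) (H1 _ _ _)).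

  unfold Rmax, Rmin in *. destruct (Rle_dec _ _); destruct (Rle_dec _ _); lra.
Qed.

Lemma anc_self p : anc p (h p) = p.
Proof.
  pose proof (h_ge0 p). apply m_eq; rewrite anc_h by lra; [reflexivity|].
  rewrite anc_m by lra. rewrite m_self. elim_min; lra.
Qed.

Lemma DM_anc p a b : 0 <= a <= h p -> 0 <= b <= h p -> DM (anc p a) (anc p b) = Rabs (a - b).
Proof.
  intros Ha Hb. unfold DM. rewrite !anc_h by lra. rewrite anc_m by lra.
  rewrite m_sym, anc_m by lra. rewrite m_self. elim_min; elim_abs; lra.
Qed.

Lemma DM_geo p q : exists sg, is_geo DM sg p q (DM p q).
Proof.
  set (M := m p q).
  assert (HM0 : 0 <= M) by apply m_ge0.
  assert (HMp : M <= h p) by apply m_le. assert (HMq : M <= h q) by apply m_le'.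
  exists (fun s => if Rle_dec s (h p - M) then anc p (h p - s) else anc q (s - h p + 2 * M)).
  assert (EL : DM p q = h p + h q - 2 * M) by reflexivity.
  assert (Hpp : forall a b, 0 <= a <= h p -> 0 <= b <= h p -> DM (anc p a) (anc p b) = Rabs (a - b)).
  { intros a b Ha Hb. unfold DM. rewrite !anc_h by lra. rewrite anc_m by lra.
    rewrite m_sym, anc_m by lra. rewrite m_self. elim_min; elim_abs; lra. }
  assert (Hqq : forall a b, 0 <= a <= h q -> 0 <= b <= h q -> DM (anc q a) (anc q b) = Rabs (a - b)).
  { intros a b Ha Hb. unfold DM. rewrite !anc_h by lra. rewrite anc_m by lra.
    rewrite m_sym, anc_m by lra. rewrite m_self. elim_min; elim_abs; lra. }
  assert (Hpq : forall a b, M <= a <= h p -> M <= b <= h q -> DM (anc p a) (anc q b) = a + b - 2 * M).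
  { intros a b Ha Hb. unfold DM. rewrite !anc_h by lra. rewrite anc_m by lra.
    rewrite m_sym, anc_m by lra. rewrite m_sym. fold M. elim_min; lra. }
  split; [|split; [|split]].
  - pose proof (DM_metric) as [Hd _]. apply Hd.
  - destruct (Rle_dec 0 (h p - M)); [|lra]. rewrite Rminus_0_r. apply anc_self.
  - rewrite EL. destruct (Rle_dec (h p + h q - 2 * M) (h p - M)).
    + apply m_eq; rewrite ?anc_h by lra; [lra|]. rewrite anc_m by lra. fold M. elim_min; lra.
    + replace (h p + h q - 2 * M - h p + 2 * M) with (h q) by ring. apply anc_self.
  - intros s t Hs Ht. rewrite EL in Hs, Ht.
    destruct (Rle_dec s (h p - M)); destruct (Rle_dec t (h p - M)).
    + rewrite Hpp by lra. elim_abs; lra.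
    + rewrite Hpq by lra. elim_abs; lra.
    + pose proof DM_metric as [_ [_ [Hs' _]]]. rewrite Hs'. rewrite Hpq by lra. elim_abs; lra.
    + rewrite Hqq by lra. elim_abs; lra.
Qed.

Theorem DM_R_tree : is_R_tree DM.
Proof. apply gen_R_tree; [apply DM_metric|apply DM_four|apply DM_geo]. Qed.

End MTree.

Definition fl r := IZR (Int_part r).
Definition is_int r := fl r = r.

Lemma fl_spec r : fl r <= r < fl r + 1.
Proof. unfold fl. pose proof (base_Int_part r). lra. Qed.

Lemma int_ex r : is_int r -> exists z, r = IZR z.
Proof. unfold is_int, fl. intros <-. eauto. Qed.

Lemma is_int_IZR z : is_int (IZR z).
Proof.
  unfold is_int, fl. pose proof (base_Int_part (IZR z)) as [H1 H2].
  apply le_IZR in H1.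
  assert (IZR z < IZR (Int_part (IZR z) + 1)) by (rewrite plus_IZR; lra).
  apply lt_IZR in H. f_equal. lia.
Qed.

Lemma is_int_fl r : is_int (fl r).
Proof. apply is_int_IZR. Qed.

Lemma int_close a b : is_int a -> is_int b -> a < b + 1 -> b < a + 1 -> a = b.
Proof.
  intros Ha Hb H1 H2. destruct (int_ex _ Ha) as [za ->]. destruct (int_ex _ Hb) as [zb ->].
  assert (IZR za < IZR (zb + 1)) by (rewrite plus_IZR; lra).
  assert (IZR zb < IZR (za + 1)) by (rewrite plus_IZR; lra).
  apply lt_IZR in H. apply lt_IZR in H0. f_equal. lia.
Qed.

Lemma int_lt a b : is_int a -> is_int b -> a < b -> a + 1 <= b.
Proof.
  intros Ha Hb H1. destruct (int_ex _ Ha) as [za ->]. destruct (int_ex _ Hb) as [zb ->].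
  apply lt_IZR in H1. rewrite <- plus_IZR. apply IZR_le. lia.
Qed.

Lemma is_int_plus a b : is_int a -> is_int b -> is_int (a + b).
Proof.
  intros Ha Hb. destruct (int_ex _ Ha) as [za ->]. destruct (int_ex _ Hb) as [zb ->].
  rewrite <- plus_IZR. apply is_int_IZR.
Qed.
Lemma is_int_minus a b : is_int a -> is_int b -> is_int (a - b).
Proof.
  intros Ha Hb. destruct (int_ex _ Ha) as [za ->]. destruct (int_ex _ Hb) as [zb ->].
  rewrite <- minus_IZR. apply is_int_IZR.
Qed.
Lemma is_int_0 : is_int 0.
Proof. apply (is_int_IZR 0). Qed.
Lemma is_int_1 : is_int 1.
Proof. apply (is_int_IZR 1). Qed.

Lemma fl_unique n r : is_int n -> n <= r < n + 1 -> fl r = n.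
Proof.
  intros Hn Hr. pose proof (fl_spec r). apply int_close; [apply is_int_fl|exact Hn|lra|lra].
Qed.

Lemma fl_int n : is_int n -> fl n = n.
Proof. auto. Qed.

Lemma fl_mono r s : r <= s -> fl r <= fl s.
Proof.
  intros H. destruct (Rle_dec (fl r) (fl s)) as [?|Hn]; [assumption|].
  assert (fl s + 1 <= fl r) by (apply int_lt; try apply is_int_fl; lra).
  pose proof (fl_spec r). pose proof (fl_spec s). lra.
Qed.

Lemma int_le_fl n r : is_int n -> n <= r -> n <= fl r.
Proof.
  intros Hn H. rewrite <- (fl_int n Hn). apply fl_mono, H.
Qed.

Lemma fl_min_int n r : is_int n -> fl (Rmin n r) = Rmin n (fl r).
Proof.
  intros Hn. destruct (rmin_cases n r) as [[H E]|[H E]]; rewrite E.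
  - pose proof (int_le_fl n r Hn H). rewrite (fl_int n Hn). elim_min; lra.
  - pose proof (fl_spec r). elim_min; lra.
Qed.

Lemma fl_min a b : fl (Rmin a b) = Rmin (fl a) (fl b).
Proof.
  destruct (rmin_cases a b) as [[H E]|[H E]]; rewrite E.
  - pose proof (fl_mono a b H). elim_min; lra.
  - assert (b <= a) by lra. pose proof (fl_mono b a H0). elim_min; lra.
Qed.

Lemma int_frac n t : is_int n -> 0 < t < 1 -> ~ is_int (n + t).
Proof.
  intros Hn Ht Hi. assert (is_int t).
  { replace t with (n + t - n) by ring. apply is_int_minus; assumption. }
  pose proof (int_lt 0 t is_int_0 H). pose proof (int_lt t 1 H is_int_1). lra.
Qed.

Section Graph.
Variable X : Type.
Variable d : X -> X -> R.
Hypothesis HT : is_R_tree d.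
Variable x0 : X.

Local Notation rh := (rho X d x0).
Local Notation gpp := (gp X d x0).
Local Notation gxx := (gx X d HT x0).

Definition Vt := {z : X | is_int (rh z)}.
Definition Et := {z : X | is_int (rh z) /\ 1 <= rh z}.

Lemma rh_x0 : rh x0 = 0.
Proof. unfold rho. apply (proj1 (proj2 (proj1 HT))). reflexivity. Qed.

Lemma root_ok : is_int (rh x0).
Proof. rewrite rh_x0. apply is_int_0. Qed.

Definition root : Vt := exist _ x0 root_ok.
Definition mkV (z : X) : Vt :=
  match excluded_middle_informative (is_int (rh z)) with
  | left H => exist _ z H
  | right _ => root
  end.
Definition src (e : Et) : Vt := mkV (gxx (proj1_sig e) (rh (proj1_sig e) - 1)).
Definition tgt (e : Et) : Vt := exist _ (proj1_sig e) (proj1 (proj2_sig e)).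

Definition rep (p : real_pt Vt Et) : X :=
  match p with RV v => proj1_sig v | RE e _ => proj1_sig e end.
Definition ht (p : real_pt Vt Et) : R :=
  match p with RV v => rh (proj1_sig v) | RE e t => rh (proj1_sig e) - 1 + proj1_sig t end.
Definition kk x y := fl (gpp x y).
Definition mm p q := Rmin (Rmin (ht p) (ht q)) (kk (rep p) (rep q)).

Lemma frac_ok t : fl t <> t -> 0 < t - fl t < 1.
Proof. intros H. pose proof (fl_spec t). destruct H0 as [H1 H2]. split; [|lra].
  destruct H1; [lra|contradiction]. Qed.

Definition anc (p : real_pt Vt Et) (t : R) : real_pt Vt Et :=
  match Req_dec_T (fl t) t with
  | left _ => RV (mkV (gxx (rep p) t))
  | right Hn =>
    match excluded_middle_informative
            (is_int (rh (gxx (rep p) (fl t + 1))) /\ 1 <= rh (gxx (rep p) (fl t + 1))) with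
    | left He => RE (exist (fun z => is_int (rh z) /\ 1 <= rh z) (gxx (rep p) (fl t + 1)) He)
                    (exist _ (t - fl t) (frac_ok t Hn))
    | right _ => RV root
    end
  end.

Definition DD := DM (real_pt Vt Et) ht mm.

Lemma V_eq (v w : Vt) : proj1_sig v = proj1_sig w -> v = w.
Proof. destruct v as [v hv], w as [w hw]; simpl; intros ->. f_equal; apply proof_irrelevance. Qed.
Lemma E_eq (v w : Et) : proj1_sig v = proj1_sig w -> v = w.
Proof. destruct v as [v hv], w as [w hw]; simpl; intros ->. f_equal; apply proof_irrelevance. Qed.
Lemma RE_eq (e1 e2 : Et) (t1 t2 : {t : R | 0 < t < 1}) :
  proj1_sig e1 = proj1_sig e2 -> proj1_sig t1 = proj1_sig t2 -> @RE Vt Et e1 t1 = RE e2 t2.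
Proof.
  intros H1 H2. rewrite (E_eq e1 e2 H1). f_equal.
  destruct t1 as [t1 h1], t2 as [t2 h2]; simpl in *; subst. f_equal; apply proof_irrelevance.
Qed.
Lemma mkV_val z : is_int (rh z) -> proj1_sig (mkV z) = z.
Proof. intros H. unfold mkV. destruct (excluded_middle_informative _); [reflexivity|contradiction]. Qed.

Lemma rhge0 z : 0 <= rh z.
Proof. apply (rho_ge0 X d HT). Qed.

Lemma rep_int p : is_int (rh (rep p)).
Proof. destruct p as [v|e t]; simpl; [exact (proj2_sig v)|exact (proj1 (proj2_sig e))]. Qed.

Lemma ht_bounds p : 0 <= ht p /\ ht p <= rh (rep p) < ht p + 1.
Proof.
  destruct p as [v|e t]; simpl.
  - pose proof (rhge0 (proj1_sig v)). lra.
  - destruct e as [e [Hi He]]. destruct t as [t Ht]. simpl. lra.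
Qed.

Lemma kk_sym x y : kk x y = kk y x.
Proof. unfold kk. rewrite (gp_sym X d HT). reflexivity. Qed.
Lemma kk_ge0 x y : 0 <= kk x y.
Proof. unfold kk. apply int_le_fl; [apply is_int_0|apply (gp_ge0 X d HT)]. Qed.
Lemma kk_le x y : kk x y <= fl (rh x).
Proof. unfold kk. apply fl_mono, (gp_le X d HT). Qed.
Lemma kk_self x : is_int (rh x) -> kk x x = rh x.
Proof. intros H. unfold kk. rewrite (gp_xx X d HT). exact H. Qed.
Lemma kk_ultra x y z : Rmin (kk x y) (kk y z) <= kk x z.
Proof. unfold kk. rewrite <- fl_min. apply fl_mono, (ultra X d HT). Qed.
Lemma kk_gx x s y : 0 <= s <= rh x -> is_int s -> kk (gxx x s) y = Rmin s (kk x y).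
Proof. intros Hs Hi. unfold kk. rewrite (gp_gx X d HT) by exact Hs. apply fl_min_int, Hi. Qed.
Lemma rh_gx x s : 0 <= s <= rh x -> rh (gxx x s) = s.
Proof. apply (gx_rho X d HT). Qed.

Lemma h_ge0 p : 0 <= ht p.
Proof. apply ht_bounds. Qed.
Lemma m_ge0 p q : 0 <= mm p q.
Proof. unfold mm. pose proof (h_ge0 p). pose proof (h_ge0 q). pose proof (kk_ge0 (rep p) (rep q)). elim_min; lra. Qed.
Lemma m_sym p q : mm p q = mm q p.
Proof. unfold mm. rewrite kk_sym. rewrite (Rmin_comm (ht p)). reflexivity. Qed.
Lemma m_le p q : mm p q <= ht p.
Proof. unfold mm. elim_min; lra. Qed.
Lemma m_self p : mm p p = ht p.
Proof. unfold mm. rewrite kk_self by apply rep_int. pose proof (ht_bounds p). elim_min; lra. Qed.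
Lemma m_ultra p q r : Rmin (mm p r) (mm r q) <= mm p q.
Proof. unfold mm. pose proof (kk_ultra (rep p) (rep r) (rep q)). elim_min; lra. Qed.

Lemma m_eq p q : ht p = ht q -> mm p q = ht p -> p = q.
Proof.
  intros Hh Hm. unfold mm in Hm.
  assert (Hk : ht p <= kk (rep p) (rep q)) by (elim_min; lra).
  assert (Hg : ht p <= gpp (rep p) (rep q)) by (pose proof (fl_spec (gpp (rep p) (rep q))); unfold kk in Hk; lra).
  pose proof (gp_le X d HT x0 (rep p) (rep q)). pose proof (gp_le' X d HT x0 (rep p) (rep q)).
  destruct p as [v|e t]; destruct q as [w|e' t']; simpl in *.
  - f_equal. apply V_eq. apply (eq_of X d HT x0); lra.
  - exfalso. destruct e' as [e' [Hi He]]; destruct t' as [t' Ht']; simpl in *.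
    apply (int_frac (rh e' - 1) t'); [apply is_int_minus; [exact Hi|apply is_int_1]|exact Ht'|].
    rewrite <- Hh. exact (proj2_sig v).
  - exfalso. destruct e as [e [Hi He]]; destruct t as [t Ht]; simpl in *.
    apply (int_frac (rh e - 1) t); [apply is_int_minus; [exact Hi|apply is_int_1]|exact Ht|].
    rewrite Hh. exact (proj2_sig w).
  - destruct e as [e [Hi He]]; destruct t as [t Ht]; destruct e' as [e' [Hi' He']]; destruct t' as [t' Ht']; simpl in *.
    assert (Ee : rh e = rh e') by (apply int_close; [exact Hi|exact Hi'|lra|lra]).
    assert (Hk' : rh e <= kk e e').
    { assert (rh e - 1 + 1 <= kk e e') by (apply int_lt; [apply is_int_minus; [exact Hi|apply is_int_1]|apply is_int_fl|lra]).
      lra. }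
    apply RE_eq; simpl; [|lra].
    apply (eq_of X d HT x0); [lra|]. pose proof (fl_spec (gpp e e')). unfold kk in Hk'. lra.
Qed.

Lemma anc_spec p t : 0 <= t <= ht p -> ht (anc p t) = t /\
  exists c, t <= c /\ forall y, kk (rep (anc p t)) y = Rmin c (kk (rep p) y).
Proof.
  intros Ht. pose proof (ht_bounds p) as [_ [Hb1 Hb2]]. pose proof (rep_int p) as Hri.
  unfold anc. destruct (Req_dec_T (fl t) t) as [Hint|Hn].
  - assert (Hv : is_int (rh (gxx (rep p) t))) by (rewrite rh_gx by lra; exact Hint).
    simpl. rewrite mkV_val by exact Hv. rewrite rh_gx by lra. split; [reflexivity|].
    exists t. split; [lra|]. intros y. apply kk_gx; [lra|exact Hint].
  - pose proof (fl_spec t) as Hft.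
    assert (Hlt : fl t < t) by (destruct Hft as [[?|?] _]; [assumption|contradiction]).
    assert (H1 : fl t + 1 <= rh (rep p)) by (apply int_lt; [apply is_int_fl|exact Hri|lra]).
    assert (H0 : 0 <= fl t) by (apply int_le_fl; [apply is_int_0|lra]).
    assert (Hz : rh (gxx (rep p) (fl t + 1)) = fl t + 1) by (apply rh_gx; lra).
    destruct (excluded_middle_informative _) as [He|Hne].
    + simpl. rewrite Hz. split; [ring|]. exists (fl t + 1). split; [lra|].
      intros y. apply kk_gx; [lra|apply is_int_plus; [apply is_int_fl|apply is_int_1]].
    + exfalso. apply Hne. rewrite Hz. split; [apply is_int_plus; [apply is_int_fl|apply is_int_1]|lra].
Qed.

Lemma anc_h p t : 0 <= t <= ht p -> ht (anc p t) = t.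
Proof. intros H. apply (anc_spec p t H). Qed.
Lemma anc_m p t q : 0 <= t <= ht p -> mm (anc p t) q = Rmin t (mm p q).
Proof.
  intros H. destruct (anc_spec p t H) as [Eh [c [Hc Ek]]].
  unfold mm. rewrite Eh, Ek. elim_min; lra.
Qed.

Lemma DD_R_tree : is_R_tree DD.
Proof.
  apply (DM_R_tree _ ht mm anc h_ge0 m_ge0 m_sym m_le m_self m_ultra m_eq anc_h anc_m).
Qed.


Lemma DD_metric : is_metric DD.
Proof. apply (DM_metric _ ht mm m_sym m_le m_self m_ultra m_eq). Qed.
Lemma DD_anc q a b : 0 <= a <= ht q -> 0 <= b <= ht q -> DD (anc q a) (anc q b) = Rabs (a - b).
Proof. apply (DM_anc _ ht mm anc m_sym m_self anc_h anc_m). Qed.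

Lemma anc_same p q t : 0 <= t <= ht p -> 0 <= t <= ht q -> t <= mm p q -> anc p t = anc q t.
Proof.
  intros Hp Hq Hm. apply m_eq; [rewrite !anc_h by lra; reflexivity|].
  rewrite anc_m by lra. rewrite m_sym, anc_m by lra. rewrite anc_h by lra. rewrite m_sym. elim_min; lra.
Qed.

Definition vtx (p : real_pt Vt Et) : Vt := exist _ (rep p) (rep_int p).

Lemma mm_vtx p : mm (RV (vtx p)) p = ht p.
Proof.
  unfold mm. simpl. rewrite kk_self by apply rep_int. pose proof (ht_bounds p). elim_min; lra.
Qed.

Lemma anc_rep p : anc (RV (vtx p)) (ht p) = p.
Proof.
  pose proof (ht_bounds p) as Hb. apply m_eq.
  - rewrite anc_h; [reflexivity|simpl; lra].
  - rewrite anc_m by (simpl; lra). rewrite mm_vtx. rewrite anc_h by (simpl; lra). elim_min; lra.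
Qed.

Lemma src_val (e : Et) : proj1_sig (src e) = gxx (proj1_sig e) (rh (proj1_sig e) - 1) /\
  rh (proj1_sig (src e)) = rh (proj1_sig e) - 1.
Proof.
  destruct e as [z [Hi H1]]. simpl. pose proof (rhge0 z).
  assert (E : rh (gxx z (rh z - 1)) = rh z - 1) by (apply rh_gx; lra).
  unfold src. simpl. rewrite mkV_val; [|rewrite E; apply is_int_minus; [exact Hi|apply is_int_1]].
  split; [reflexivity|exact E].
Qed.

Lemma eq_by p q : ht p = ht q -> mm q p = ht p -> p = q.
Proof. intros H1 H2. apply m_eq; [exact H1|]. rewrite m_sym. exact H2. Qed.

Lemma on_edge_anc (e : Et) p s : on_edge src tgt e p s ->
  0 <= s <= 1 /\ p = anc (RV (tgt e)) (rh (proj1_sig e) - 1 + s).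
Proof.
  pose proof (src_val e) as [Sv Sr].
  set (z := proj1_sig e) in *. set (N := rh z) in *.
  assert (Hi : is_int N) by exact (proj1 (proj2_sig e)).
  assert (H1 : 1 <= N) by exact (proj2 (proj2_sig e)).
  assert (Htg : ht (RV (tgt e)) = N) by reflexivity.
  assert (Hrt : rep (RV (tgt e)) = z) by reflexivity.
  assert (Hsh : ht (RV (src e)) = N - 1) by exact Sr.
  assert (Hsr : rep (RV (src e)) = gxx z (N - 1)) by exact Sv.
  assert (Hzz : kk z z = N) by (apply kk_self; exact Hi).
  assert (Mts : mm (RV (tgt e)) (RV (src e)) = N - 1).
  { unfold mm. rewrite Htg, Hrt, Hsh, Hsr, kk_sym, kk_gx; [rewrite Hzz; elim_min; lra|unfold N in *; lra|].
    apply is_int_minus; [exact Hi|apply is_int_1]. }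
  intros [[-> ->]|[[-> ->]|[h ->]]]; (split; [lra|]); apply eq_by.
  - rewrite anc_h by lra. lra.
  - rewrite anc_m by lra. rewrite Mts, Hsh. elim_min; lra.
  - rewrite anc_h by lra. lra.
  - rewrite anc_m by lra. rewrite m_self, Htg. elim_min; lra.
  - rewrite anc_h by lra. reflexivity.
  - rewrite anc_m by lra.
    assert (Mte : mm (RV (tgt e)) (RE e (exist (fun t : R => 0 < t < 1) s h)) = N - 1 + s).
    { unfold mm. rewrite Htg, Hrt. change (rep (RE e (exist (fun t : R => 0 < t < 1) s h))) with z.
      change (ht (RE e (exist (fun t : R => 0 < t < 1) s h))) with (N - 1 + s). rewrite Hzz. elim_min; lra. }
    rewrite Mte. change (ht (RE e (exist (fun t : R => 0 < t < 1) s h))) with (N - 1 + s). elim_min; lra.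
Qed.

Lemma anc_on_edge (e : Et) a : rh (proj1_sig e) - 1 <= a <= rh (proj1_sig e) ->
  on_edge src tgt e (anc (RV (tgt e)) a) (a - rh (proj1_sig e) + 1).
Proof.
  intros Ha. set (N := rh (proj1_sig e)) in *.
  destruct (Req_dec a (N - 1)) as [E1|N1].
  - left. split; [|lra]. symmetry.
    transitivity (anc (RV (tgt e)) (N - 1 + 0)); [|f_equal; lra].
    apply (proj2 (on_edge_anc e _ _ (or_introl (conj eq_refl eq_refl)))).
  - destruct (Req_dec a N) as [E2|N2].
    + right; left. split; [|lra]. symmetry.
      transitivity (anc (RV (tgt e)) (N - 1 + 1)); [|f_equal; lra].
      apply (proj2 (on_edge_anc e _ _ (or_intror (or_introl (conj eq_refl eq_refl))))).
    + right; right. assert (h : 0 < a - N + 1 < 1) by lra. exists h. symmetry.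
      transitivity (anc (RV (tgt e)) (N - 1 + (a - N + 1))); [|f_equal; ring].
      apply (proj2 (on_edge_anc e _ _ (or_intror (or_intror (ex_intro _ h eq_refl))))).
Qed.

Lemma edge_DD p r c : edge_step src tgt p r c -> DD p r = c.
Proof.
  intros [e [s [t [Hp [Hr ->]]]]].
  destruct (on_edge_anc e p s Hp) as [Hs ->]. destruct (on_edge_anc e r t Hr) as [Ht ->].
  destruct e as [z [Hi H1]]. simpl. rewrite DD_anc by (simpl; lra). f_equal. ring.
Qed.

Lemma chain_L p q L L' : chain src tgt p q L -> L = L' -> chain src tgt p q L'.
Proof. intros H <-. exact H. Qed.

Lemma chain_app p r q L1 L2 : chain src tgt p r L1 -> chain src tgt r q L2 -> chain src tgt p q (L1 + L2).
Proof.
  intros H1. revert q L2. induction H1 as [p|p r' q' c L Hs Hc IH]; intros q L2 H2.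
  - eapply chain_L; [exact H2|ring].
  - eapply chain_L; [apply (chain_cons _ _ p r' q c (L + L2) Hs (IH _ _ H2))|ring].
Qed.

Lemma step_sym p r c : edge_step src tgt p r c -> edge_step src tgt r p c.
Proof. intros [e [s [t [H1 [H2 ->]]]]]. exists e, t, s. split; [exact H2|]. split; [exact H1|]. apply Rabs_minus_sym. Qed.

Lemma chain_rev p q L : chain src tgt p q L -> chain src tgt q p L.
Proof.
  induction 1 as [p|p r q c L Hs Hc IH].
  - apply chain_nil.
  - eapply chain_L; [apply (chain_app q r p L (c + 0) IH (chain_cons _ _ r p p c 0 (step_sym _ _ _ Hs) (chain_nil _ _ p)))|ring].
Qed.

Lemma chain_ge p q L : chain src tgt p q L -> DD p q <= L.
Proof.
  induction 1 as [p|p r q c L Hs Hc IH].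
  - pose proof DD_metric as [_ [Hz _]]. rewrite (proj2 (Hz p p) eq_refl). lra.
  - pose proof DD_metric as [_ [_ [_ Ht]]]. pose proof (Ht p r q). rewrite (edge_DD _ _ _ Hs) in H. lra.
Qed.

Lemma edge_chain (e : Et) a b : rh (proj1_sig e) - 1 <= a <= rh (proj1_sig e) ->
  rh (proj1_sig e) - 1 <= b <= rh (proj1_sig e) ->
  chain src tgt (anc (RV (tgt e)) a) (anc (RV (tgt e)) b) (Rabs (a - b)).
Proof.
  intros Ha Hb. eapply chain_L.
  - apply (chain_cons _ _ _ (anc (RV (tgt e)) b) _ (Rabs (a - b)) 0); [|apply chain_nil].
    exists e, (a - rh (proj1_sig e) + 1), (b - rh (proj1_sig e) + 1).
    split; [apply anc_on_edge; exact Ha|]. split; [apply anc_on_edge; exact Hb|]. f_equal. ring.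
  - ring.
Qed.

Lemma descent_n n : forall p, ht p <= INR n -> forall t, 0 <= t <= ht p -> chain src tgt p (anc p t) (ht p - t).
Proof.
  induction n as [|n IH]; intros p Hp t Ht.
  - simpl in Hp. pose proof (h_ge0 p). assert (t = ht p) by lra. subst t.
    rewrite <- (anc_rep p) at 1. rewrite anc_same with (q := p).
    + eapply chain_L; [apply chain_nil|ring].
    + simpl. pose proof (ht_bounds p). lra.
    + lra.
    + rewrite mm_vtx. lra.
  - rewrite S_INR in Hp. destruct (Rle_dec (ht p) (INR n)) as [Hle|Hgt]; [apply IH; assumption|].
    pose proof (ht_bounds p) as [Hb0 [Hb1 Hb2]].
    assert (Hn : is_int (INR n)) by (rewrite INR_IZR_INZ; apply is_int_IZR).
    assert (HN1 : INR n + 1 <= rh (rep p)) by (apply int_lt; [exact Hn|apply rep_int|lra]).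
    assert (HN2 : rh (rep p) <= INR n + 1).
    { destruct (Rle_dec (rh (rep p)) (INR n + 1)) as [?|Hc]; [assumption|].
      assert (INR n + 1 + 1 <= rh (rep p)) by (apply int_lt; [apply is_int_plus; [exact Hn|apply is_int_1]|apply rep_int|lra]).
      lra. }
    pose proof (pos_INR n) as Hn0.
    assert (He : is_int (rh (rep p)) /\ 1 <= rh (rep p)) by (split; [apply rep_int|lra]).
    set (e := exist (fun z => is_int (rh z) /\ 1 <= rh z) (rep p) He : Et).
    assert (Ete : tgt e = vtx p) by (apply V_eq; reflexivity).
    assert (Eanc : forall s, 0 <= s <= ht p -> anc p s = anc (RV (tgt e)) s).
    { intros s Hs. rewrite Ete. symmetry. apply anc_same; [simpl; lra|lra|]. rewrite mm_vtx. lra. }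
    assert (Ep : p = anc (RV (tgt e)) (ht p)) by (rewrite Ete; symmetry; apply anc_rep).
    assert (Erh : rh (proj1_sig e) = rh (rep p)) by reflexivity.
    destruct (Rle_dec (INR n) t) as [Hnt|Hnt].
    + rewrite Eanc by lra. rewrite Ep at 1. eapply chain_L.
      * apply edge_chain; rewrite Erh; lra.
      * elim_abs; lra.
    + assert (Hu : chain src tgt p (anc p (INR n)) (ht p - INR n)).
      { rewrite Eanc by lra. rewrite Ep at 1. eapply chain_L.
        * apply edge_chain; rewrite Erh; lra.
        * elim_abs; lra. }
      set (u := anc p (INR n)) in *.
      assert (Hhu : ht u = INR n) by (apply anc_h; lra).
      assert (Hc2 := IH u ltac:(lra) t ltac:(lra)).
      assert (Euq : anc u t = anc p t).
      { apply anc_same; [lra|lra|]. unfold u. rewrite anc_m by lra. rewrite m_self. elim_min; lra. }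
      rewrite Euq, Hhu in Hc2. eapply chain_L; [apply (chain_app _ _ _ _ _ Hu Hc2)|ring].
Qed.

Lemma descent p t : 0 <= t <= ht p -> chain src tgt p (anc p t) (ht p - t).
Proof.
  intros Ht. destruct (INR_unbounded (ht p)) as [n Hn]. apply (descent_n n); [lra|exact Ht].
Qed.

Lemma DD_chain p q : chain src tgt p q (DD p q).
Proof.
  assert (H0 : 0 <= mm p q) by apply m_ge0. assert (H1 : mm p q <= ht p) by apply m_le.
  assert (H2 : mm p q <= ht q) by (rewrite m_sym; apply m_le).
  set (M := mm p q) in *.
  pose proof (descent p M ltac:(lra)) as C1. pose proof (descent q M ltac:(lra)) as C2.
  assert (E : anc p M = anc q M) by (apply anc_same; unfold M in *; lra).
  rewrite E in C1. apply chain_rev in C2.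
  eapply chain_L; [apply (chain_app _ _ _ _ _ C1 C2)|]. unfold DD, DM. fold M. ring.
Qed.

Lemma DD_path : is_path_metric src tgt DD.
Proof.
  intros p q. split.
  - intros L H. apply chain_ge, H.
  - intros m Hm. apply Hm, DD_chain.
Qed.

Lemma DD_simplicial : simplicial_graph src tgt.
Proof.
  split.
  - intros e E. pose proof (src_val e) as [_ Sr]. rewrite E in Sr. simpl in Sr. lra.
  - intros e e' [[E1 E2]|[E1 E2]].
    + apply E_eq. apply (f_equal (@proj1_sig _ _)) in E2. exact E2.
    + exfalso. pose proof (src_val e) as [_ S1]. pose proof (src_val e') as [_ S2].
      rewrite E1 in S1. rewrite <- E2 in S2. simpl in S1, S2. lra.
Qed.

Definition fmap (x : X) : real_pt Vt Et := RV (mkV (gxx x (fl (rh x)))).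

Lemma fmap_props x : ht (fmap x) = fl (rh x) /\ rep (fmap x) = gxx x (fl (rh x)).
Proof.
  pose proof (fl_spec (rh x)). pose proof (rhge0 x).
  assert (Hf0 : 0 <= fl (rh x)) by (apply int_le_fl; [apply is_int_0|lra]).
  assert (E : rh (gxx x (fl (rh x))) = fl (rh x)) by (apply rh_gx; lra).
  unfold fmap. simpl. rewrite mkV_val by (rewrite E; apply is_int_fl). split; [exact E|reflexivity].
Qed.

Lemma fmap_qi : is_1C_quasi_isometry d DD 2 fmap.
Proof.
  split.
  - intros a b. destruct (fmap_props a) as [Ha Ra]. destruct (fmap_props b) as [Hb Rb].
    pose proof (fl_spec (rh a)). pose proof (fl_spec (rh b)). pose proof (rhge0 a). pose proof (rhge0 b).
    assert (H0a : 0 <= fl (rh a)) by (apply int_le_fl; [apply is_int_0|lra]).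
    assert (H0b : 0 <= fl (rh b)) by (apply int_le_fl; [apply is_int_0|lra]).
    unfold DD, DM, mm. rewrite Ha, Hb, Ra, Rb.
    rewrite kk_gx by (lra || apply is_int_fl). rewrite kk_sym. rewrite kk_gx by (lra || apply is_int_fl).
    pose proof (kk_le b a) as K1. pose proof (kk_le a b) as K2. rewrite kk_sym in K2.
    pose proof (fl_spec (gpp b a)). unfold kk in *.
    rewrite (d_gp X d x0 a b). rewrite (gp_sym X d HT x0 a b).
    elim_min; lra.
  - intros p. pose proof (ht_bounds p) as [Hb0 [Hb1 Hb2]].
    set (y := gxx (rep p) (ht p)). exists y.
    assert (Ey : rh y = ht p) by (apply rh_gx; lra).
    destruct (fmap_props y) as [Hy Ry]. rewrite Ey in Hy, Ry.
    pose proof (fl_spec (ht p)).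
    assert (Hf0 : 0 <= fl (ht p)) by (apply int_le_fl; [apply is_int_0|lra]).
    unfold DD, DM, mm. rewrite Hy, Ry. rewrite kk_sym. rewrite kk_gx by (rewrite ?Ey; lra || apply is_int_fl).
    assert (Ek : kk y (rep p) = fl (ht p)).
    { unfold y, kk. rewrite (gp_gx X d HT) by lra. rewrite (gp_xx X d HT). f_equal. elim_min; lra. }
    rewrite Ek. elim_min; lra.
Qed.

End Graph.

Theorem proposition4p4 :
  forall (X : Type) (d : X -> X -> R),
    is_R_tree d ->
    exists (V E : Type) (src tgt : E -> V) (D : real_pt V E -> real_pt V E -> R),
      is_simplicial_tree src tgt D /\
      exists f : X -> real_pt V E, is_1C_quasi_isometry d D 2 f.
Proof.
  intros X d HT. destruct (classic (inhabited X)) as [[x0]|Hne].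
  - exists (Vt X d x0), (Et X d x0), (src X d HT x0), (tgt X d x0), (DD X d x0).
    split.
    + split; [apply (DD_simplicial X d HT x0)|split; [apply (DD_path X d HT x0)|apply (DD_R_tree X d HT x0)]].
    + exists (fmap X d HT x0). apply (fmap_qi X d HT x0).
  - exists Empty_set, Empty_set, (fun e : Empty_set => match e return Empty_set with end), (fun e : Empty_set => match e return Empty_set with end),
      (fun _ _ => 0).
    split.
    + split; [split; intros e; destruct e|split].
      * intros p; destruct p as [v|e t]; destruct v || destruct e.
      * split; [split; [|split; [|split]]; intros p; destruct p as [v|e t]; (destruct v || destruct e)|].
        intros p; destruct p as [v|e t]; (destruct v || destruct e).
    + exists (fun x => match Hne (inhabits x) with end). split.
      * intros a; destruct (Hne (inhabits a)).
      * intros p; destruct p as [v|e t]; (destruct v || destruct e).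
Qed.
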